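(* Let $n\ge2$ and consider the network in which every pair of the $n$ clients shares exactly one message unique to that pair and there are no other messages (so $m=\binom{n}{2}$ and the hypergraph representation is the complete simple graph $K_n$). Then for every integer $\tau$ with $1\le\tau\le\lfloor n/2\rfloor$, $\mathsf{S}^{(\tau)}_{\mathrm{L}}(\{\mathcal{I}_j\})=\tau(n-2)$.
   Context: Network model: $n$ clients $c_1,\dots,c_n$, finite sets $\mathcal{I}_1,\dots,\mathcal{I}_n$ of message indices; messages $X_i$ i.i.d. uniform on a finite field $\mathbb{F}$ with $|\mathbb{F}|>n$; client $c_j$ holds $\{X_i:i\in\mathcal{I}_j\}$; $\underline{X}$ is the vector of all messages. A protocol: in each of $t$ rounds one client broadcasts to all an element of $\mathbb{F}$ that is a function of its own messages, the round index, and all previous broadcasts; $\mathbf{T}(\underline{X})\in\mathbb{F}^t$ collects the broadcasts. Linear protocol: each broadcast is an $\mathbb{F}$-linear combination of the transmitter's messages. A protocol generates $\tau$ secret keys if there are functions $\mathsf{k}_j$ with $K=\mathsf{k}_1(\{X_i:i\in\mathcal{I}_1\},\mathbf{T}(\underline{X}))$ such that (i) $\mathsf{k}_j(\{X_i:i\in\mathcal{I}_j\},\mathbf{T}(\underline{X}))=K$ a.s. for all $j$; (ii) $K$ is uniform on $\mathbb{F}^\tau$; (iii) $I(K;\mathbf{T}(\underline{X}))=0$. $\mathsf{S}^{(\tau)}_{\mathrm{L}}(\{\mathcal{I}_j\})$ is the minimum number of transmissions of a linear protocol generating $\tau$ secret keys ($\infty$ if none). The hypergraph representation of $\{\mathcal{I}_j\}$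 has vertex set $\{c_1,\dots,c_n\}$ and one hyperedge for each message index $e$, with $c_j\in e$ iff $e\in\mathcal{I}_j$. *)

(* Defs.v *)
From HB Require Import structures.
From mathcomp Require Import all_boot all_order all_algebra all_field.
Set Implicit Arguments. Unset Strict Implicit. Unset Printing Implicit Defensive.
Import GRing.Theory.
Local Open Scope ring_scope.

(* General network: n clients ('I_n), finite type M of message indices,
   [holds j e] iff message e belongs to I_j (client j holds X_e).
   A realisation of the messages is X : {ffun M -> F}; the messages are
   i.i.d. uniform, i.e. X is uniform on {ffun M -> F}, so probabilities
   are counts divided by #|{ffun M -> F}|. *)

Definition lin_transmit (F : fieldType) (M : finType) (t : nat)
  (A : 'I_t -> M -> F) (X : {ffun M -> F}) : 'rV[F]_t :=
  \row_(r < t) \sum_(e : M) A r e * X e.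

Definition is_linear_protocol (F : fieldType) (n : nat) (M : finType)
  (holds : 'I_n -> M -> bool) (t : nat) (s : 'I_t -> 'I_n)
  (A : 'I_t -> M -> F) : Prop :=
  forall r e, A r e != 0 -> holds (s r) e.

Definition generates_keys (F : finFieldType) (n : nat) (M : finType)
  (holds : 'I_n -> M -> bool) (t tau : nat)
  (T : {ffun M -> F} -> 'rV[F]_t) : Prop :=
  exists (k : 'I_n -> {ffun M -> F} -> 'rV[F]_t -> 'rV[F]_tau)
         (K : {ffun M -> F} -> 'rV[F]_tau),
    (forall j (X Y : {ffun M -> F}) y,
        (forall e, holds j e -> X e = Y e) -> k j X y = k j Y y) /\
    (* (i) every client recovers the same key K (a.s. = surely, since every
       realisation has positive probability) *)
    (forall j X, k j X (T X) = K X) /\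
    (* (ii) K is uniform on F^tau *)
    (forall kappa : 'rV[F]_tau,
        (#|[set X | K X == kappa]| * #|F| ^ tau = #|{: {ffun M -> F}}|)%N) /\
    (* (iii) I(K; T) = 0, i.e. K and T(X) are independent *)
    (forall (kappa : 'rV[F]_tau) (y : 'rV[F]_t),
        (#|[set X | (K X == kappa) && (T X == y)]| * #|{: {ffun M -> F}}|
         = #|[set X | K X == kappa]| * #|[set X | T X == y]|)%N).

Definition lin_keys_with (F : finFieldType) (n : nat) (M : finType)
  (holds : 'I_n -> M -> bool) (tau t : nat) : Prop :=
  exists (s : 'I_t -> 'I_n) (A : 'I_t -> M -> F),
    is_linear_protocol holds s A /\
    generates_keys holds tau (lin_transmit A).

Definition SL_eq (F : finFieldType) (n : nat) (M : finType)
  (holds : 'I_n -> M -> bool) (tau v : nat) : Prop :=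
  lin_keys_with F holds tau v /\
  (forall t, lin_keys_with F holds tau t -> (v <= t)%N).

(* Complete graph K_n: one message per unordered pair {i,j}, i < j,
   held exactly by c_i and c_j. *)
Definition pair_msg (n : nat) := {p : 'I_n * 'I_n | (p.1 < p.2)%N}.

Definition Kn_holds (n : nat) (j : 'I_n) (e : pair_msg n) : bool :=
  ((val e).1 == j) || ((val e).2 == j).

(* Main.v *)
Require Import Defs.
From mathcomp Require Import all_boot all_order all_algebra all_field.
From HB Require Import structures.
From mathcomp Require Import zify.
Set Implicit Arguments. Unset Strict Implicit. Unset Printing Implicit Defensive.
Import GRing.Theory.
Local Open Scope ring_scope.


Section LinAlg.
Variable F : fieldType.
Variables (n m t : nat) (hol : 'I_n -> 'I_m -> bool).

Definition Vc j : 'M[F]_m := diag_mx (\row_c (hol j c)%:R).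

Lemma sub_VcP k (x : 'M[F]_(k, m)) j :
  reflect (forall a c, ~~ hol j c -> x a c = 0) (x <= Vc j)%MS.
Proof.
apply: (iffP idP).
  move=> /submxP [u ->] a c hc; rewrite mul_mx_diag !mxE (negbTE hc) mulr0 //.
move=> H; apply/submxP; exists x; apply/matrixP => a c.
rewrite mul_mx_diag !mxE; case: (boolP (hol j c)) => h; first by rewrite mulr1.
by rewrite mulr0 H.
Qed.

Lemma perp_Vc k (y : 'M[F]_(k, m)) j :
  y *m (Vc j)^T = 0 -> forall a c, hol j c -> y a c = 0.
Proof.
move=> /matrixP H a c hc; have := H a c.
rewrite tr_diag_mx mul_mx_diag !mxE hc mulr1 //.
Qed.

Definition perp k (X : 'M[F]_(k, m)) : 'M[F]_m := kermx X^T.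

Lemma perpS k1 k2 (X : 'M[F]_(k1, m)) (X' : 'M[F]_(k2, m)) :
  (X <= X')%MS -> (perp X' <= perp X)%MS.
Proof.
move=> /submxP [c ->]; apply/sub_kermxP.
by rewrite trmx_mul mulmxA (sub_kermxP (submx_refl _)) mul0mx.
Qed.

Lemma perpperp k (X : 'M[F]_(k, m)) : (perp (perp X) <= X)%MS.
Proof.
have sX : (X <= perp (perp X))%MS.
  apply/sub_kermxP; rewrite -[X]trmxK -trmx_mul trmxK.
  by rewrite (sub_kermxP (submx_refl _)) trmx0.
have := mxrank_leqif_sup sX; rewrite /perp !mxrank_ker !mxrank_tr.
rewrite mxrank_ker mxrank_tr subKn ?rank_leq_col // => -[_ <-]; by rewrite eqxx.
Qed.


Lemma rank_sums_le k (E : 'I_k -> 'M[F]_m) :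
  (\rank (\sum_j E j)%MS <= \sum_j \rank (E j))%N.
Proof.
elim/big_rec2: _ => [|j a B _ IH]; first by rewrite mxrank0.
by apply: leq_trans (mxrank_adds_leqif _ _) _; rewrite leq_add2l.
Qed.

Hypothesis two : forall c, exists u v, u != v /\ forall j, hol j c = (j == u) || (j == v).

Lemma other i c : hol i c -> exists k, [/\ k != i, hol k c &
   forall j, j != i -> j != k -> ~~ hol j c].
Proof.
have [u [v [uv H]]] := two c; rewrite H => /orP[]/eqP ->.
  exists v; split; first by rewrite eq_sym.
    by rewrite H eqxx orbT.
  by move=> j h1 h2; rewrite H negb_or h1 h2.
exists u; split => //; first by rewrite H eqxx.
by move=> j h1 h2; rewrite H negb_or h1 h2.
Qed.

Variable lam : 'I_n -> F.
Hypothesis lam_inj : injective lam.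

Definition Lm j : 'M[F]_(m, m + m) := row_mx 1%:M (lam j)%:M.

Lemma Lm_free j : row_free (Lm j).
Proof.
rewrite /row_free eqn_leq rank_leq_row /=.
have e : (1%:M : 'M[F]_m) = Lm j *m col_mx 1%:M 0.
  by rewrite /Lm mul_row_col mul1mx mulmx0 addr0.
have := mxrankM_maxl (Lm j) (col_mx 1%:M 0); rewrite -e mxrank1 //.
Qed.

Lemma sub_PLm (P : 'M[F]_m) j (y : 'rV[F]_(m + m)) :
  (y <= P *m Lm j)%MS -> (lsubmx y <= P)%MS /\ rsubmx y = lam j *: lsubmx y.
Proof.
move=> /submxP [u ->]; rewrite mulmxA /Lm mul_mx_row row_mxKl row_mxKr mulmx1.
by split; [exact: submxMl | rewrite mul_mx_scalar].
Qed.

Lemma lam_sum (D : 'M[F]_m) :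
  (\sum_j \rank (D :&: Vc j)%MS <= 2 * \rank D)%N.
Proof.
pose E j := <<(D :&: Vc j)%MS *m Lm j>>%MS.
have rE j : \rank (E j) = \rank (D :&: Vc j)%MS.
  by rewrite genmxE mxrankMfree ?Lm_free.
have dx : mxdirect (\sum_j E j).
  apply/mxdirect_sumsP => i _; apply/eqP; rewrite -submx0; apply/row_subP => a.
  set z := row a _.
  have zE : (z <= E i)%MS by apply: submx_trans (row_sub _ _) (capmxSl _ _).
  have zS : (z <= \sum_(j | true && (j != i)) E j)%MS.
    by apply: submx_trans (row_sub _ _) (capmxSr _ _).
  rewrite genmxE in zE; have [la ra] := sub_PLm zE.
  have laV : (lsubmx z <= Vc i)%MS := submx_trans la (capmxSr _ _).
  have [u_ zdef] := sub_sumsmxP zS.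
  have bP j : (lsubmx (u_ j *m E j) <= Vc j)%MS /\
      rsubmx (u_ j *m E j) = lam j *: lsubmx (u_ j *m E j).
    have := submxMl (u_ j) (E j); rewrite genmxE => /sub_PLm [h1 h2].
    by split => //; apply: submx_trans h1 (capmxSr _ _).
  have l0 : lsubmx z = 0.
    apply/rowP => c; rewrite [RHS]mxE.
    case: (boolP (hol i c)) => hic; last by move/sub_VcP: laV => ->.
    have [k [ki hk oth]] := other hic.
    have eq1 : lsubmx z 0 c = lsubmx (u_ k *m E k) 0 c.
      rewrite zdef linear_sum summxE (bigD1 k) ?ki //= big1 ?addr0 //.
      move=> j /andP[ji jk]; have [h _] := bP j.
      by move/sub_VcP: h => ->; rewrite ?oth.
    have eq2 : rsubmx z 0 c = lam k * lsubmx (u_ k *m E k) 0 c.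
      rewrite zdef linear_sum summxE (bigD1 k) ?ki //= big1 ?addr0.
        by have [_ ->] := bP k; rewrite mxE.
      move=> j /andP[ji jk]; have [h ->] := bP j.
      by rewrite mxE; move/sub_VcP: h => ->; rewrite ?mulr0 ?oth.
    move: eq2; rewrite ra mxE -eq1 => /eqP; rewrite -subr_eq0 -mulrBl mulf_eq0.
    case/orP => [|/eqP //]; rewrite subr_eq0 => /eqP /lam_inj /eqP.
    by rewrite eq_sym (negbTE ki).
  by rewrite -(hsubmxK z) l0 ra l0 scaler0 row_mx0 sub0mx.
have := mxdirectP dx; rewrite /= => rS.
have sub2 : ((\sum_j E j)%MS <= D *m row_mx 1%:M 0 + D *m row_mx 0 1%:M)%MS.
  apply/sumsmx_subP => j _; rewrite genmxE.
  have -> : (D :&: Vc j)%MS *m Lm j = (D :&: Vc j)%MS *m row_mx 1%:M 0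
     + (lam j *: (D :&: Vc j)%MS) *m row_mx 0 1%:M.
    rewrite /Lm !mul_mx_row !mulmx1 !mulmx0 add_row_mx addr0 add0r.
    by rewrite mul_mx_scalar.
  apply: addmx_sub_adds; apply: submxMr; first exact: capmxSl.
  by apply: scalemx_sub; exact: capmxSl.
have := mxrankS sub2; rewrite rS.
under eq_bigr do rewrite rE.
move=> h; apply: leq_trans h _.
apply: leq_trans (mxrank_adds_leqif _ _) _.
by rewrite mul2n -addnn leq_add // mxrankM_maxl.
Qed.


Variables (s : 'I_t -> 'I_n) (A : 'M[F]_(t, m)).
Hypothesis supp : forall r c, A r c != 0 -> hol (s r) c.

Definition Dm := (\bigcap_j (A + Vc j)%MS)%MS.
Definition Sm := (\sum_j perp (A + Vc j)%MS)%MS.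

Lemma conv_rank : ((n - 2) * (\rank Dm - \rank A) <= \rank A)%N.
Proof.
have sWD : (A <= Dm)%MS by apply/sub_bigcapmxP => j _; exact: addsmxSl.
have rP j : \rank (Dm :&: Vc j)%MS = (\rank Dm - \rank A + \rank (A :&: Vc j))%N.
  have h1 := mxrank_sum_cap Dm (Vc j).
  have h2 := mxrank_sum_cap A (Vc j).
  have e : \rank (Dm + Vc j)%MS = \rank (A + Vc j)%MS.
    apply/eqmx_rank; apply/andP; split.
      rewrite addsmx_sub addsmxSr andbT.
      by apply: (bigcapmx_inf j) => //; exact: submx_refl.
    by apply: addsmxS => //; exact: submx_refl.
  have : (\rank A <= \rank Dm)%N by apply: mxrankS.
  have : (\rank (A :&: Vc j)%MS <= \rank (Vc j))%N by apply: mxrankS; exact: capmxSr.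
  lia.
have wle : (\rank A <= \sum_j \rank (A :&: Vc j)%MS)%N.
  apply: leq_trans (rank_sums_le _).
  apply: mxrankS; apply/row_subP => r.
  apply: (sumsmx_sup (s r)) => //; rewrite sub_capmx row_sub /=.
  apply/sub_VcP => a c hc; rewrite mxE; apply/eqP; apply: contraNT hc; exact: supp.
have := lam_sum Dm.
under eq_bigr do rewrite rP.
rewrite big_split /= sum_nat_const card_ord.
have : (\rank A <= \rank Dm)%N by apply: mxrankS.
move=> h1 h2; move: (subnK h1) (leq_trans (leq_add (leqnn _) wle) h2); set x := (_ - _)%N; rewrite mulnBl. clearbody x. lia.
Qed.

Lemma conv_perp : (\rank (perp A) - \rank Sm <= \rank Dm - \rank A)%N.
Proof.
have h : (perp Sm <= Dm)%MS.
  apply/sub_bigcapmxP => j _.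
  apply: submx_trans (perpperp _); apply: perpS.
  by apply: (sumsmx_sup j).
have := mxrankS h; rewrite /perp !mxrank_ker !mxrank_tr.
have := rank_leq_col Sm; have := rank_leq_col A.
lia.
Qed.

End LinAlg.

Section KeyConv.
Variable F : finFieldType.
Variables (n m t tau : nat) (hol : 'I_n -> 'I_m -> bool).
Hypothesis two : forall c, exists u v, u != v /\ forall j, hol j c = (j == u) || (j == v).
Variable lam : 'I_n -> F.
Hypothesis lam_inj : injective lam.
Variables (s : 'I_t -> 'I_n) (A : 'M[F]_(t, m)).
Hypothesis supp : forall r c, A r c != 0 -> hol (s r) c.
Variable K' : 'rV[F]_m -> 'rV[F]_tau.
Hypothesis loc : forall j (x y : 'rV[F]_m), x *m A^T = 0 ->
  (y <= perp (A + Vc F hol j)%MS)%MS -> K' (x + y) = K' x.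
Hypothesis onto : forall k, exists x, x *m A^T = 0 /\ K' x = k.

Let Sm' := Sm hol A.

Lemma invS (z : 'rV[F]_m) : (z <= Sm')%MS ->
  forall x, x *m A^T = 0 -> K' (x + z) = K' x.
Proof.
move=> /sub_sumsmxP [u_ ->].
pose P (z : 'rV[F]_m) := z *m A^T = 0 /\ forall x, x *m A^T = 0 -> K' (x + z) = K' x.
suff : P (\sum_(j | true) u_ j *m perp (A + Vc F hol j)%MS) by case.
apply: big_ind.
- by split; [rewrite mul0mx | move=> x _; rewrite addr0].
- move=> z1 z2 [h1 H1] [h2 H2].
  split; first by rewrite mulmxDl h1 h2 addr0.
  by move=> x hx; rewrite addrA H2 ?H1 // mulmxDl hx h1 addr0.
- move=> j _; have hy : (u_ j *m perp (A + Vc F hol j)%MS <= perp (A + Vc F hol j)%MS)%MS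
    by exact: submxMl.
  split.
    apply/sub_kermxP; apply: submx_trans hy _; apply: perpS; exact: addsmxSl.
  by move=> x hx; apply: loc hx hy.
Qed.

Lemma tau_le : (tau <= \rank (perp A) - \rank Sm')%N.
Proof.
pose U := perp A.
pose Q := U *m cokermx Sm'.
have rQ : (\rank Q <= \rank U - \rank Sm')%N.
  have := mxrank_mul_ker U (cokermx Sm').
  have : (Sm' <= U :&: kermx (cokermx Sm'))%MS.
    rewrite sub_capmx; apply/andP; split.
      apply/sumsmx_subP => j _; apply: perpS; exact: addsmxSl.
    by apply/sub_kermxP; apply/eqP; rewrite -submxE submx_refl.
  move/mxrankS; rewrite -/Q; lia.
pose x k := odflt 0 [pick x : 'rV[F]_m | (x *m A^T == 0) && (K' x == k)].
have xP k : x k *m A^T = 0 /\ K' (x k) = k.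
  rewrite /x; case: pickP => [y /andP[/eqP -> /eqP ->] // | H].
  have [y [h1 h2]] := onto k; move: (H y); rewrite h1 h2 !eqxx //.
pose g k : 'rV[F]_(\rank Q) := (x k *m cokermx Sm') *m pinvmx (row_base Q).
have ginj : injective g.
  move=> k1 k2 e.
  have yQ k : (x k *m cokermx Sm' <= row_base Q)%MS.
    rewrite eq_row_base; apply: submxMr; apply/sub_kermxP; exact: (xP k).1.
  have : x k1 *m cokermx Sm' = x k2 *m cokermx Sm'.
    by rewrite -(mulmxKpV (yQ k1)) -(mulmxKpV (yQ k2)) -/(g k1) -/(g k2) e.
  move/eqP; rewrite -subr_eq0 -mulmxBl -submxE => hS.
  have := invS hS (xP k2).1; rewrite addrC subrK (xP k1).2 (xP k2).2 //.
have := leq_card g ginj; rewrite !card_mx !mul1n.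
rewrite leq_exp2l; last by have := finRing_gt1 F.
move=> h; apply: leq_trans h rQ.
Qed.

Lemma key_conv : ((n - 2) * tau <= t)%N.
Proof.
have h1 := conv_rank two lam_inj supp.
have h2 := conv_perp hol A.
have h3 := tau_le.
have h4 := rank_leq_row A.
apply: leq_trans h4; apply: leq_trans h1.
by rewrite leq_mul2l (leq_trans h3 h2) orbT.
Qed.

End KeyConv.


Lemma card_fib (T U : finType) (P : pred T) (f : T -> U) :
  #|[set x | P x]| = (\sum_(y : U) #|[set x | P x && (f x == y)]|)%N.
Proof.
rewrite -sum1dep_card (partition_big f xpredT) //=.
by apply: eq_bigr => y _; rewrite sum1dep_card.
Qed.

Section Count.
Variables (M : finType) (F : finFieldType) (a b : nat).
Variables (K : {ffun M -> F} -> 'rV[F]_a) (T : {ffun M -> F} -> 'rV[F]_b).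
Hypothesis KD : forall X Y, K (X + Y) = K X + K Y.
Hypothesis TD : forall X Y, T (X + Y) = T X + T Y.
Hypothesis onto : forall k y, exists X, K X = k /\ T X = y.

Let fib k y := [set X | (K X == k) && (T X == y)].
Let c := #|fib 0 0|.

Lemma KB X Y : K (X - Y) = K X - K Y.
Proof. by apply/eqP; rewrite eq_sym subr_eq -KD subrK. Qed.
Lemma TB X Y : T (X - Y) = T X - T Y.
Proof. by apply/eqP; rewrite eq_sym subr_eq -TD subrK. Qed.

Lemma card_fibc k y : #|fib k y| = c.
Proof.
have [X0 [h1 h2]] := onto k y.
have -> : fib k y = [set (X : {ffun M -> F}) + X0 | X in fib 0 0].
  apply/setP => X; rewrite inE; apply/idP/imsetP.
    move=> /andP[/eqP hk /eqP hy]; exists (X - X0); last by rewrite subrK.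
    by rewrite inE KB TB hk hy h1 h2 !subrr !eqxx.
  move=> [Z]; rewrite inE => /andP[/eqP hk /eqP hy] ->.
  by rewrite KD TD hk hy h1 h2 !add0r !eqxx.
by rewrite card_imset //; apply: addIr.
Qed.

Lemma cardK k : #|[set X | K X == k]| = (c * #|F| ^ b)%N.
Proof.
rewrite (card_fib _ T); under eq_bigr do rewrite (card_fibc k).
by rewrite sum_nat_const card_mx mul1n mulnC.
Qed.

Lemma cardT y : #|[set X | T X == y]| = (c * #|F| ^ a)%N.
Proof.
rewrite (card_fib _ K); under eq_bigr => k _.
  have -> : [set x | (T x == y) && (K x == k)] = fib k y
    by apply/setP => X; rewrite !inE andbC.
  rewrite card_fibc; over.
by rewrite sum_nat_const card_mx mul1n mulnC.
Qed.

Lemma cardAll : #|{: {ffun M -> F}}| = (c * #|F| ^ b * #|F| ^ a)%N.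
Proof.
have -> : #|{: {ffun M -> F}}| = #|[set X : {ffun M -> F} | true]|.
  by rewrite cardsT.
rewrite (card_fib _ K) /=; under eq_bigr => k _ do rewrite cardK.
by rewrite sum_nat_const card_mx mul1n mulnC.
Qed.

Lemma count_unif k : (#|[set X | K X == k]| * #|F| ^ a = #|{: {ffun M -> F}}|)%N.
Proof. by rewrite cardK cardAll. Qed.

Lemma count_ind k y : (#|[set X | (K X == k) && (T X == y)]| * #|{: {ffun M -> F}}|
   = #|[set X | K X == k]| * #|[set X | T X == y]|)%N.
Proof.
rewrite -/(fib k y) card_fibc cardAll cardK cardT; rewrite !mulnA; congr (_ * _)%N; rewrite mulnAC -!mulnA; congr (_ * _)%N; rewrite mulnC mulnA.
Qed.

End Count.


Section Glue.
Variables (F : finFieldType) (M : finType).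

Definition vec (X : {ffun M -> F}) : 'rV[F]_#|M| := \row_i X (enum_val i).
Definition unvec (x : 'rV[F]_#|M|) : {ffun M -> F} := [ffun e => x 0 (enum_rank e)].

Lemma unvecK x : vec (unvec x) = x.
Proof. by apply/rowP => i; rewrite !mxE ffunE enum_valK. Qed.

Lemma vecK X : unvec (vec X) = X.
Proof. by apply/ffunP => e; rewrite ffunE mxE enum_rankK. Qed.

Lemma unvecD x y : unvec (x + y) = unvec x + unvec y.
Proof. by apply/ffunP => e; rewrite !ffunE mxE. Qed.

Definition Amat t (A : 'I_t -> M -> F) : 'M[F]_(t, #|M|) :=
  \matrix_(r, i) A r (enum_val i).

Lemma transE t (A : 'I_t -> M -> F) X :
  lin_transmit A X = vec X *m (Amat A)^T.
Proof.
apply/rowP => r; rewrite !mxE.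
rewrite (reindex (@enum_val M (mem predT))) /=; last first.
  by exists enum_rank => e _; rewrite ?enum_valK ?enum_rankK.
by apply: eq_bigr => i _; rewrite !mxE mulrC.
Qed.

End Glue.

Lemma conv_main (F : finFieldType) (n tau t : nat) :
  (n < #|F|)%N -> lin_keys_with F (@Kn_holds n) tau t -> ((n - 2) * tau <= t)%N.
Proof.
move=> hn [s [A [lin [k [K [hloc [hK [hunif hind]]]]]]]].
pose hol (j : 'I_n) (i : 'I_#|{: {p : 'I_n * 'I_n | (p.1 < p.2)%N}}|) := Kn_holds j (enum_val i).
have two : forall c, exists u v, u != v /\ forall j, hol j c = (j == u) || (j == v).
  move=> c; exists (val (enum_val c)).1, (val (enum_val c)).2; split.
    by have := valP (enum_val c); rewrite /= neq_ltn => ->.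
  by move=> j; rewrite /hol /Kn_holds ![_ == j]eq_sym.
pose lam (j : 'I_n) : F := @enum_val F (mem predT) (widen_ord (ltnW hn) j).
have lam_inj : injective lam.
  by move=> a b /enum_val_inj [] /val_inj.
have supp : forall r c, Amat A r c != 0 -> hol (s r) c.
  by move=> r c; rewrite mxE => /lin.
pose K' x := K (unvec x).
have Tu z : lin_transmit A (unvec z) = z *m (Amat A)^T by rewrite transE unvecK.
apply: (@key_conv F n _ t tau hol two lam lam_inj s (Amat A) supp K').
  move=> j x y hx hy.
  have hyA : y *m (Amat A)^T = 0.
    by apply/sub_kermxP; apply: submx_trans hy _; apply: perpS; exact: addsmxSl.
  have hyV : y *m (Vc F hol j)^T = 0.
    by apply/sub_kermxP; apply: submx_trans hy _; apply: perpS; exact: addsmxSr.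
  rewrite /K' -(hK j) -(hK j (unvec x)) !Tu mulmxDl hx hyA addr0.
  apply: hloc => e he; rewrite unvecD ffunE.
  rewrite [unvec y e]ffunE (perp_Vc hyV) ?addr0 //.
  by rewrite /hol enum_rankK.
move=> kap.
have hX : (0 < #|{: {ffun pair_msg n -> F}}|)%N.
  by apply/card_gt0P; exists [ffun => 0].
have h1 : (0 < #|[set X | K X == kap]|)%N.
  rewrite lt0n; apply/eqP => e0; move: (hunif kap); rewrite e0 mul0n => e.
  by move: hX; rewrite -e.
have h2 : (0 < #|[set X | lin_transmit A X == (0%R : 'rV[F]_t)]|)%N.
  apply/card_gt0P; exists 0; rewrite inE; apply/eqP/rowP => r.
  by rewrite !mxE big1 // => e _; rewrite ffunE mulr0.
have := hind kap 0%R.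
have : (0 < #|[set X | K X == kap]| * #|[set X | lin_transmit A X == (0%R : 'rV[F]_t)]|)%N
  by rewrite muln_gt0 h1 h2.
move=> hp e; rewrite -e muln_gt0 in hp.
case/andP: hp => /card_gt0P [X]; rewrite inE => /andP [/eqP hk /eqP ht] _.
exists (vec X); split; last by rewrite /K' vecK.
by rewrite -transE.
Qed.


Definition tg (i q : nat) := if (q < 2 * i)%N then q else (q + 2)%N.
Definition sn (i k : nat) := (2 * i + (if (i < k %/ 2)%N then 1 - k %% 2 else k %% 2))%N.
Definition qq (i j : nat) := if (j < 2 * i)%N then j else (j - 2)%N.

Lemma mask_nat i i' q q' :
  let k := tg i q in let k' := tg i' q' in
  ((sn i k = sn i' k' /\ k = k') \/ (sn i k = k' /\ k = sn i' k')) -> i = i' /\ q = q'.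
Proof.
rewrite /= /sn /tg; case: ifP; case: ifP => h1 h2; case: ifP; case: ifP => h3 h4; lia.
Qed.

Lemma key_mask_nat i i' q :
  let k := tg i' q in
  ~ ((2 * i = sn i' k /\ (2 * i).+1 = k) \/ (2 * i = k /\ (2 * i).+1 = sn i' k))%N.
Proof.
rewrite /= /sn /tg; case: ifP; case: ifP => h1 h2; lia.
Qed.

Section Edges.
Variables (n : nat) (hn : (1 < n)%N).
Local Notation PM := {p : 'I_n * 'I_n | (p.1 < p.2)%N}.

Definition o (x : nat) : 'I_n := insubd (Ordinal (ltnW hn)) x.
Lemma val_o x : (x < n)%N -> val (o x) = x.
Proof. by move=> h; rewrite /o val_insubd h. Qed.

Lemma e0P : ((o 0, o 1).1 < (o 0, o 1).2)%N.
Proof. by rewrite /= !val_o // ltnW. Qed.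
Definition e0 : PM := exist _ (o 0, o 1) e0P.

Definition ed (u v : nat) : PM := insubd e0 (o (minn u v), o (maxn u v)).

Lemma holds_ed (j : 'I_n) u v : (u < n)%N -> (v < n)%N -> u != v ->
  Kn_holds j (ed u v) = (j == u :> nat) || (j == v :> nat).
Proof.
move=> hu hv huv; rewrite /Kn_holds /ed val_insubd /=.
have hmi : (minn u v < n)%N by rewrite gtn_min hu.
have hma : (maxn u v < n)%N by rewrite gtn_max hu hv.
rewrite ifT; last by rewrite /= !val_o //; move: huv; clear; lia.
rewrite -!(inj_eq val_inj) /= !val_o //.
by case: (leqP u v) => h; rewrite ![_ == val j]eq_sym // orbC.
Qed.

End Edges.

Section Edges2.
Variables (n : nat) (hn : (1 < n)%N).

Lemma ed_inj u v u' v' : (u < n)%N -> (v < n)%N -> (u' < n)%N -> (v' < n)%N ->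
  u != v -> u' != v' -> ed hn u v = ed hn u' v' ->
  (u = u' /\ v = v') \/ (u = v' /\ v = u').
Proof.
move=> hu hv hu' hv' huv huv' e.
have H (j : 'I_n) : (j == u :> nat) || (j == v :> nat) = (j == u' :> nat) || (j == v' :> nat)
   :> bool.
  by rewrite -(holds_ed hn j hu hv huv) -(holds_ed hn j hu' hv' huv') e.
have := H (o hn u); have := H (o hn v); have := H (o hn u'); rewrite !val_o //.
rewrite !eqxx /= ?orbT /=.
move: huv huv'; clear; lia.
Qed.

End Edges2.

Section Construction.
Variables (F : finFieldType) (n tau : nat).
Hypotheses (hn : (1 < n)%N) (ht : (0 < tau)%N) (htn : (tau <= n./2)%N).
Local Notation PM := {p : 'I_n * 'I_n | (p.1 < p.2)%N}.
Local Notation N := (n - 2)%N.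
Local Notation t := (tau * (n - 2))%N.

Definition key (i : 'I_tau) : PM := ed hn (2 * i)%N (2 * i)%N.+1.
Definition ci (r : 'I_t) : 'I_tau := insubd (Ordinal ht) (r %/ N)%N.
Definition kr (r : 'I_t) := tg (ci r) (r %% N)%N.
Definition cr (r : 'I_t) := sn (ci r) (kr r).
Definition mask r := ed hn (cr r) (kr r).
Definition sA (r : 'I_t) : 'I_n := o hn (cr r).
Definition AA (r : 'I_t) (e : PM) : F := (e == key (ci r))%:R + (e == mask r)%:R.
Definition KK (X : {ffun PM -> F}) : 'rV[F]_tau := \row_i X (key i).
Definition get (y : 'rV[F]_t) (r : nat) : F := \sum_(r' < t | r' == r :> nat) y 0 r'.
Definition kk (j : 'I_n) (X : {ffun PM -> F}) (y : 'rV[F]_t) : 'rV[F]_tau :=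
  \row_(i < tau) (if (j == (2 * i)%N :> nat) || (j == (2 * i).+1 :> nat) then X (key i)
          else get y (i * N + qq i j)%N - X (ed hn (sn i j) j)).

Lemma i2 (i : 'I_tau) : ((2 * i).+1 < n)%N.
Proof. have := ltn_ord i; move: htn; clear; lia. Qed.

Lemma Npos (r : 'I_t) : (0 < N)%N.
Proof. rewrite lt0n; apply/eqP => e; have := ltn_ord r; move: (val r) => x; by rewrite e muln0. Qed.

Lemma ci_val r : val (ci r) = (r %/ N)%N.
Proof. by rewrite /ci val_insubd ltn_divLR ?Npos // ltn_ord. Qed.

Lemma r_facts r :
  [/\ (kr r < n)%N, (cr r < n)%N, (cr r = 2 * ci r \/ cr r = (2 * ci r).+1)%N,
      kr r <> (2 * ci r)%N & kr r <> (2 * ci r).+1].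
Proof.
have hq : (r %% N < N)%N by rewrite ltn_pmod ?Npos.
have hi := i2 (ci r).
rewrite /cr /kr /sn /tg; case: ifP => h1; case: ifP => h2; split; lia.
Qed.

Lemma key_inj : injective key.
Proof.
move=> i i' /ed_inj e; apply: val_inj.
have h1 := i2 i; have h2 := i2 i'.
have [] := e (ltnW h1) h1 (ltnW h2) h2; rewrite ?neq_ltn ?ltnSn //= => ?; lia.
Qed.

Lemma mask_inj : injective mask.
Proof.
move=> r r' /ed_inj e.
have [k1 c1 p1 n1 n1'] := r_facts r; have [k2 c2 p2 n2 n2'] := r_facts r'.
have H := e c1 k1 c2 k2.
have /H {}H : cr r != kr r by apply/eqP; lia.
have /H {}H : cr r' != kr r' by apply/eqP; lia.
have [hi hq] := mask_nat H.
apply: val_inj; rewrite /= (divn_eq r N) (divn_eq r' N) -!ci_val.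
have -> : \val (ci r) = \val (ci r') by exact: hi.
by rewrite hq.
Qed.

Lemma key_mask i r : key i != mask r.
Proof.
apply/eqP => /ed_inj e.
have [k1 c1 p1 n1 n1'] := r_facts r; have h := i2 i.
have H := e (ltnW h) h c1 k1.
have /H {}H : (2 * i)%N != (2 * i).+1 by rewrite neq_ltn ltnSn.
have /H {}H : cr r != kr r by apply/eqP; lia.
exact: (key_mask_nat H).
Qed.

Lemma sum_delta (a : PM) (X : {ffun PM -> F}) :
  \sum_e (e == a)%:R * X e = X a.
Proof.
rewrite (bigD1 a) //= eqxx mul1r big1 ?addr0 // => e /negbTE ->.
by rewrite mul0r.
Qed.

Lemma transE2 X : lin_transmit AA X = \row_r (X (key (ci r)) + X (mask r)).
Proof.
apply/rowP => r; rewrite !mxE.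
under eq_bigr do rewrite /AA mulrDl.
by rewrite big_split /= !sum_delta.
Qed.

Lemma sn_facts (i : 'I_tau) j : (sn i j = 2 * i \/ sn i j = (2 * i).+1)%N.
Proof. rewrite /sn; case: ifP => _; lia. Qed.

Lemma lin_ok : is_linear_protocol (@Kn_holds n) sA AA.
Proof.
move=> r e; have [k1 c1 p1 n1 n1'] := r_facts r; have hi := i2 (ci r).
rewrite /AA /sA.
case: (eqVneq e (key (ci r))) => [-> _ | _].
  rewrite /key (holds_ed hn _ (ltnW hi) hi); last by rewrite neq_ltn ltnSn.
  by rewrite val_o //; case: p1 => ->; rewrite eqxx ?orbT.
case: (eqVneq e (mask r)) => [-> _ | _]; last by rewrite !add0r eqxx.
rewrite /mask (holds_ed hn _ c1 k1) ?val_o ?eqxx //; apply/eqP; lia.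
Qed.

Section Decode.
Variables (i : 'I_tau) (j : 'I_n).
Hypothesis hj : ~~ ((j == (2 * i)%N :> nat) || (j == (2 * i).+1 :> nat)).
Let hj1 : (j <> 2 * i :> nat)%N. Proof. by move: hj => /norP[/eqP]. Qed.
Let hj2 : (j <> (2 * i).+1 :> nat)%N. Proof. by move: hj => /norP[_ /eqP]. Qed.

Lemma qq_lt : (qq i j < N)%N.
Proof. have := ltn_ord j; have := i2 i; have := hj1; have := hj2; rewrite /qq; case: ifP => ?; lia. Qed.

Lemma idx_lt : (i * N + qq i j < t)%N.
Proof.
have h : (i * N + qq i j < i.+1 * N)%N by rewrite mulSnr ltn_add2l qq_lt.
by apply: leq_trans h _; rewrite leq_mul2r ltn_ord orbT.
Qed.

Definition ridx : 'I_t := Ordinal idx_lt.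

Lemma Npos' : (0 < N)%N.
Proof. exact: Npos ridx. Qed.

Lemma ci_ridx : ci ridx = i.
Proof.
apply: val_inj; rewrite ci_val /= divnMDl ?Npos' // divn_small ?qq_lt //.
by rewrite addn0.
Qed.

Lemma kr_ridx : kr ridx = j.
Proof.
rewrite /kr ci_ridx /= modnMDl modn_small ?qq_lt //.
have := ltn_ord j; have := i2 i; have := hj1; have := hj2; rewrite /tg /qq; case: (ltnP j (2 * i)) => h; case: ifP => h'; lia.
Qed.

Lemma mask_ridx : mask ridx = ed hn (sn i j) j.
Proof. by rewrite /mask /cr kr_ridx ci_ridx. Qed.

Lemma get_ridx (y : 'rV[F]_t) : get y (i * N + qq i j)%N = y 0 ridx.
Proof.
by rewrite /get (big_pred1 ridx).


Qed.

End Decode.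

Lemma kk_ok j X : kk j X (lin_transmit AA X) = KK X.
Proof.
apply/rowP => i; rewrite !mxE; case: ifP => hj //.
have hj' : ~~ ((j == (2 * i)%N :> nat) || (j == (2 * i).+1 :> nat)) by rewrite hj.
rewrite (get_ridx hj') transE2 mxE ci_ridx mask_ridx.
by rewrite addrK.
Qed.

Lemma kk_loc j (X Y : {ffun PM -> F}) y :
  (forall e, Kn_holds j e -> X e = Y e) -> kk j X y = kk j Y y.
Proof.
move=> H; apply/rowP => i; rewrite !mxE; have hi := i2 i.
case: ifP => hj.
  apply: H; rewrite /key (holds_ed hn j (ltnW hi) hi) //.
  by rewrite neq_ltn ltnSn.
have hs := sn_facts i j.
have hsn : (sn i j < n)%N by case: hs => ->; [exact: ltnW|].
have hne : sn i j != j.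
  move/negbT/norP: hj => [/eqP h1 /eqP h2]; apply/eqP; lia.
by rewrite H // (holds_ed hn j hsn (ltn_ord j) hne) eqxx orbT.
Qed.

Definition delta (c : F) (a : PM) : {ffun PM -> F} := [ffun e => c * (e == a)%:R].

Lemma onto (k : 'rV[F]_tau) (y : 'rV[F]_t) :
  exists X, KK X = k /\ lin_transmit AA X = y.
Proof.
pose X := \sum_i delta (k 0 i) (key i) + \sum_r delta (y 0 r - k 0 (ci r)) (mask r).
have Xk i : X (key i) = k 0 i.
  rewrite /X !ffunE !sum_ffunE (bigD1 i) //= big1 ?addr0.
    rewrite big1 ?addr0; first by rewrite !ffunE eqxx mulr1.
    by move=> r _; rewrite !ffunE (negbTE (key_mask i r)) mulr0.
  move=> i' hi'; rewrite !ffunE; case: eqP => [/key_inj e|]; last by rewrite mulr0.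
  by rewrite e eqxx in hi'.
have Xm r : X (mask r) = y 0 r - k 0 (ci r).
  rewrite /X !ffunE !sum_ffunE big1 ?add0r.
    rewrite (bigD1 r) //= big1 ?addr0; first by rewrite !ffunE eqxx mulr1.
    move=> r' hr'; rewrite !ffunE; case: eqP => [/mask_inj e|]; last by rewrite mulr0.
    by rewrite e eqxx in hr'.
  by move=> i _; rewrite !ffunE eq_sym (negbTE (key_mask i r)) mulr0.
exists X; split.
  by apply/rowP => i; rewrite mxE Xk.
by apply/rowP => r; rewrite transE2 mxE Xk Xm addrC subrK.
Qed.

Lemma achieve : lin_keys_with F (@Kn_holds n) tau (tau * (n - 2)).
Proof.
exists sA, AA; split; first exact: lin_ok.
have KD : forall X Y, KK (X + Y) = KK X + KK Y.
  by move=> X Y; apply/rowP => i; rewrite !mxE ffunE.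
have TD : forall X Y, lin_transmit AA (X + Y) = lin_transmit AA X + lin_transmit AA Y.
  move=> X Y; apply/rowP => r; rewrite !mxE -big_split /=.
  by apply: eq_bigr => e _; rewrite ffunE mulrDr.
exists kk, KK; split; first exact: kk_loc.
split; first exact: kk_ok.
split => [kap | kap y].
  exact: (count_unif KD TD onto).
exact: (count_ind KD TD onto).
Qed.

End Construction.

Local Close Scope ring_scope.

Theorem mainTheorem13 (F : finFieldType) (n : nat) (tau : nat) :
  (2 <= n)%N -> (n < #|F|)%N ->
  (1 <= tau)%N -> (tau <= n./2)%N ->
  SL_eq F (@Kn_holds n) tau (tau * (n - 2)).
Proof.
move=> hn hF ht htn; split; first exact: achieve.
by move=> t H; rewrite mulnC; apply: conv_main hF H.
Qed.
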